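(* Fix $c_0>0$, $\alpha_0\in(0,1/2)$, $\nu_2>0$ and $\sigma_1>0$. For every $t>0$ and every $\theta\in(-c_0,c_0)$, $$\omega\{\theta,\sigma_1,\nu_2,t,c(t,\nu_2)\}\;\le\;\omega\{\theta,\sigma_1,\nu_2,0,c(0)\}.$$ That is, among all tests with rejection region $\{t\widehat\sigma_1-c<\widehat\theta<c-t\widehat\sigma_1\}$ whose size (rejection probability at $\theta=c_0$) equals $\alpha_0$, the one with $t=0$ (rejection region $|\widehat\theta|<c(0)$) has the largest power at every $\theta\in(-c_0,c_0)$.
   Context: Univariate setting. Let $\sigma_1>0$, $\nu_2>0$. For $\theta\in\mathbb R$, $s>0$, $t\ge 0$, $c>0$, define the rejection probability $$\omega(\theta,s,\nu_2,t,c)=\Pr\big(t\widehat\sigma_1-c<\widehat\theta<c-t\widehat\sigma_1\big),$$ computed when $\widehat\theta\sim\mathcal N(\theta,s^2)$ and $\widehat\sigma_1>0$ are independent with $\nu_2\widehat\sigma_1^2/s^2\sim\chi^2_{\nu_2}$. In particular $\omega(\theta,s,\nu_2,0,c)=\Phi\big((c-\theta)/s\big)-\Phi\big((-c-\theta)/s\big)$, with $\Phi$ the standard normal CDF. For each fixed $t\ge0$, the map $c\mapsto\omega(c_0,s,\nu_2,t,c)$ is strictly increasing on $(0,\infty)$, tends to $0$ as $c\to0$ and to $1$ as $c\to\infty$. Denote by $c(t,\nu_2)$ the unique $c>0$ with $\omega(c_0,\sigma_1,\nu_2,t,c)=\alpha_0$, and write $c(0)=c(0,\nu_2)$ for the case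 $t=0$. *)

(* Defs.v *)
From HB Require Import structures.
From mathcomp Require Import all_boot all_order all_algebra.
From mathcomp Require Import all_classical all_reals all_analysis.
Set Implicit Arguments. Unset Strict Implicit. Unset Printing Implicit Defensive.
Import Order.TTheory GRing.Theory Num.Def Num.Theory.
Import numFieldNormedType.Exports.
Local Open Scope classical_set_scope.
Local Open Scope ring_scope.

Definition pos_half_line {R : realType} : set R := `]0, +oo[%classic.

Definition chi2_kernel {R : realType} (nu u : R) : R :=
  u `^ (nu / 2 - 1) * expR (- u / 2).

(* normalizing constant  = 2^(nu/2) Gamma(nu/2) *)
Definition chi2_const {R : realType} (nu : R) : R :=
  fine (\int[lebesgue_measure]_(u in pos_half_line) (chi2_kernel nu u)%:E)%E.

Definition chi2_pdf {R : realType} (nu u : R) : R :=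
  if 0 < u then chi2_kernel nu u / chi2_const nu else 0.

(* sigma1_hat as a function of U := nu * sigma1_hat^2 / s^2 ~ chi2(nu),
   with sigma1_hat > 0 *)
Definition sigma_hat {R : realType} (s nu u : R) : R := s * Num.sqrt (u / nu).

Definition accept_region {R : realType} (t c sh : R) : set R :=
  [set x : R | t * sh - c < x < c - t * sh].

(* omega(theta, s, nu, t, c) = Pr(t sigma_hat - c < theta_hat < c - t sigma_hat)
   with theta_hat ~ N(theta, s^2) independent of sigma_hat;
   computed by integrating over the law of U (independence = product law). *)
Definition omega {R : realType} (theta s nu t c : R) : R :=
  fine (\int[lebesgue_measure]_(u in pos_half_line)
    ((chi2_pdf nu u)%:E *
     normal_prob theta s
       (accept_region t c (sigma_hat s nu u))))%E.

(* Main.v *)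
Require Import Defs.
From HB Require Import structures.
From mathcomp Require Import all_boot all_order all_algebra.
From mathcomp Require Import all_classical all_reals all_analysis.
From mathcomp Require Import measurable_realfun.
From mathcomp Require Import ring lra.
Import Order.TTheory GRing.Theory Num.Def Num.Theory.
Import numFieldNormedType.Exports.
Local Open Scope classical_set_scope.
Local Open Scope ring_scope.
Section P1.
Context {R : realType}.

Lemma Cmono (u1 u2 v1 v2 : R) : u2 = - u1 -> v2 = - v1 -> `|u1| <= v1 ->
  expR u1 + expR u2 <= expR v1 + expR v2.
Proof.
move=> -> -> h.
have E : expR u1 + expR (- u1) = expR `|u1| + expR (- `|u1|).
  by case: (ler0P u1) => _; rewrite ?opprK // addrC.
rewrite E; set p := `|u1|.
have p0 : 0 <= p by rewrite normr_ge0.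
have P1 : 1 <= expR p by apply: le_trans (expR_ge1Dx p); lra.
have PA : expR p <= expR v1 by rewrite ler_expR.
rewrite !expRN.
set P := expR p in P1 PA *; set A := expR v1 in PA *.
have A1 : 1 <= A by lra.
have P0 : P != 0 by apply/negP => /eqP; lra.
have A0 : A != 0 by apply/negP => /eqP; lra.
have e : A^-1 - P^-1 = A^-1 * P^-1 * (P - A).
  by rewrite mulrBr -mulrA mulVf // mulr1 [A^-1 * _]mulrC -mulrA mulVf // mulr1.
have iA : A^-1 <= 1 by rewrite invf_le1; lra.
have iP : P^-1 <= 1 by rewrite invf_le1; lra.
have iA0 : 0 < A^-1 by rewrite invr_gt0; lra.
have iP0 : 0 < P^-1 by rewrite invr_gt0; lra.
have : A^-1 * P^-1 <= 1 by rewrite -[1]mulr1; apply: ler_pM; lra.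
nra.
Qed.


Lemma nb1 (x y th c0 : R) : - c0 < th < c0 -> 0 <= y <= x ->
  `|x * th + y * c0| <= y * th + x * c0.
Proof.
move=> /andP[h1 h2] /andP[y0 yx].
have p1 : 0 <= (c0 - th) * (x - y) by apply: mulr_ge0; lra.
have p2 : 0 <= (c0 + th) * (x + y) by apply: mulr_ge0; lra.
rewrite ler_norml; apply/andP; split; lra.
Qed.

Lemma nb2 (x y th c0 : R) : - c0 < th < c0 -> 0 <= y <= x ->
  `|x * th + - y * c0| <= - y * th + x * c0.
Proof.
move=> /andP[h1 h2] /andP[y0 yx].
have p1 : 0 <= (c0 - th) * (x + y) by apply: mulr_ge0; lra.
have p2 : 0 <= (c0 + th) * (x - y) by apply: mulr_ge0; lra.
rewrite ler_norml; apply/andP; split; lra.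
Qed.

Lemma prodf (s m m' x y S r : R) :
  S = x ^+ 2 + y ^+ 2 + m ^+ 2 + m' ^+ 2 -> r = 2 / (s ^+ 2 *+ 2) ->
  normal_fun m s x * normal_fun m' s y =
  expR (- S / (s ^+ 2 *+ 2)) * expR ((x * m + y * m') * r).
Proof. by move=> -> ->; rewrite /normal_fun -!expRD; congr expR; ring. Qed.

Lemma norm_scale (X Y r : R) : 0 < r -> `|X| <= Y -> `|X * r| <= Y * r.
Proof. by move=> r0 h; rewrite normrM (gtr0_norm r0) ler_pM2r. Qed.
Lemma inner (s th c0 x y : R) : s != 0 -> - c0 < th < c0 -> 0 <= y <= x ->
  (normal_fun th s x + normal_fun th s (- x)) *
  (normal_fun c0 s y + normal_fun c0 s (- y)) <=
  (normal_fun th s y + normal_fun th s (- y)) *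
  (normal_fun c0 s x + normal_fun c0 s (- x)).
Proof.
move=> s0 hth hxy.
set S := x ^+ 2 + y ^+ 2 + th ^+ 2 + c0 ^+ 2.
set k := s ^+ 2 *+ 2.
have k0 : 0 < k by rewrite mulrn_wgt0 // exprn_even_gt0.
set r := 2 / k.
have r0 : 0 < r by rewrite divr_gt0.
have e1 := @prodf s th c0 x y S r erefl erefl.
have e2 := @prodf s th c0 x (- y) S r ltac:(rewrite /S; ring) erefl.
have e3 := @prodf s th c0 (- x) y S r ltac:(rewrite /S; ring) erefl.
have e4 := @prodf s th c0 (- x) (- y) S r ltac:(rewrite /S; ring) erefl.
have f1 := @prodf s th c0 y x S r ltac:(rewrite /S; ring) erefl.
have f2 := @prodf s th c0 y (- x) S r ltac:(rewrite /S; ring) erefl.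
have f3 := @prodf s th c0 (- y) x S r ltac:(rewrite /S; ring) erefl.
have f4 := @prodf s th c0 (- y) (- x) S r ltac:(rewrite /S; ring) erefl.
rewrite !mulrDl !mulrDr e1 e2 e3 e4 f1 f2 f3 f4.
move: (expR (- S / k)) (expR_gt0 (- S / k)) => Z Z0.
have A1 : expR ((x * th + y * c0) * r) + expR ((- x * th + - y * c0) * r) <=
          expR ((y * th + x * c0) * r) + expR ((- y * th + - x * c0) * r).
  apply: Cmono; [ring|ring|].
  by apply: norm_scale => //; apply: nb1.
have A2 : expR ((x * th + - y * c0) * r) + expR ((- x * th + y * c0) * r) <=
          expR ((- y * th + x * c0) * r) + expR ((y * th + - x * c0) * r).
  apply: Cmono; [ring|ring|].
  by apply: norm_scale => //; apply: nb2.
have B1 := ler_wpM2l (ltW Z0) A1.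
have B2 := ler_wpM2l (ltW Z0) A2.
rewrite !mulrDr in B1 B2.
lra.
Qed.
Definition qf (s m x : R) := normal_pdf m s x + normal_pdf m s (- x).

Lemma qcross (s th c0 x y : R) : s != 0 -> - c0 < th < c0 -> 0 <= y <= x ->
  qf s th x * qf s c0 y <= qf s th y * qf s c0 x.
Proof.
move=> s0 hth hxy.
have := @inner s th c0 x y s0 hth hxy.
rewrite /qf !normal_pdfE //=.
move: (normal_peak s) => pk.
move: (normal_fun th s x) (normal_fun th s (- x)) (normal_fun c0 s y)
  (normal_fun c0 s (- y)) (normal_fun th s y) (normal_fun th s (- y))
  (normal_fun c0 s x) (normal_fun c0 s (- x)) => a b c d e f g h H.
have pk0 : 0 <= pk ^+ 2 by rewrite sqr_ge0.
have := ler_wpM2l pk0 H.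
have -> : (pk * a + pk * b) * (pk * c + pk * d) = pk ^+ 2 * ((a + b) * (c + d)) by ring.
have -> : (pk * e + pk * f) * (pk * g + pk * h) = pk ^+ 2 * ((e + f) * (g + h)) by ring.
by [].
Qed.

Lemma qf_gt0 s m x : s != 0 -> 0 < qf s m x.
Proof.
move=> s0; rewrite /qf !normal_pdfE //=.
apply: addr_gt0; apply: mulr_gt0; rewrite ?normal_peak_gt0 // /normal_fun expR_gt0 //.
Qed.

Lemma qf_ge0 s m x : 0 <= qf s m x.
Proof. by rewrite /qf addr_ge0 // normal_pdf_ge0. Qed.

Lemma qhi (s th c0 cz x : R) : s != 0 -> - c0 < th < c0 -> 0 <= cz <= x ->
  qf s th x <= qf s th cz / qf s c0 cz * qf s c0 x.
Proof.
move=> s0 hth hx; have := @qcross s th c0 x cz s0 hth hx.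
have p := @qf_gt0 s c0 cz s0.
by rewrite mulrAC ler_pdivlMr // => ->.
Qed.

Lemma qlo (s th c0 cz x : R) : s != 0 -> - c0 < th < c0 -> 0 <= x <= cz ->
  qf s th cz / qf s c0 cz * qf s c0 x <= qf s th x.
Proof.
move=> s0 hth hx; have := @qcross s th c0 cz x s0 hth hx.
have p := @qf_gt0 s c0 cz s0.
by rewrite mulrAC ler_pdivrMr // => ->.
Qed.
Definition Iset (h : R) : set R := [set x | - h < x < h].

Let mu := @lebesgue_measure R.

Lemma mpdf (m s : R) (D : set R) : measurable_fun D (fun x => (normal_pdf m s x)%:E).
Proof.
apply: measurable_funTS; apply/measurable_EFinP; exact: measurable_normal_pdf.
Qed.

Lemma mpdfN (m s : R) (D : set R) : measurable_fun D (fun x => (normal_pdf m s (- x))%:E).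
Proof.
apply: measurable_funTS; apply/measurable_EFinP.
apply: measurableT_comp => //; exact: measurable_normal_pdf.
Qed.

Lemma NI (s m h : R) : s != 0 -> 0 <= h ->
  normal_prob m s (Iset h) = (\int[mu]_(x in `[0%R, h]) (qf s m x)%:E)%E.
Proof.
move=> s0 h0.
have -> : Iset h = `]- h, 0] `|` `]0, h[.
  rewrite /Iset; apply/seteqP; split => x /=.
    move=> /andP[a b]; case: (lerP x 0) => xh; [left|right]; rewrite /= in_itv /=; apply/andP; split => //.
  by case; rewrite /= in_itv /= => /andP[a b]; apply/andP; split; lra.
rewrite /normal_prob integral_setU //=; last 2 first.
- exact: mpdf.
- rewrite disj_set2E; apply/eqP; apply/seteqP; split => x //=.
  by rewrite !in_itv /= => -[/andP[a b] /andP[c d]]; lra.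
have -> : (\int[lebesgue_measure]_(x in `](- h)%R, 0%R]) (normal_pdf m s x)%:E)%E =
          (\int[lebesgue_measure]_(x in `[(- h)%R, (- 0)%R]) (normal_pdf m s x)%:E)%E.
  rewrite oppr0.
  rewrite (@integral_itv_bndoo _ _ _ _ false false) ?[RHS](@integral_itv_bndoo _ _ _ _ true false) //; exact: mpdf.
rewrite (@integration_by_substitution_oppr _ (normal_pdf m s) 0 h) //; last first.
  apply: continuous_subspaceT; exact: continuous_normal_pdf.
rewrite (@integral_itv_bndoo _ _ _ _ false true) //; last exact: mpdf.
rewrite -[X in (_ + X)%E](@integral_itv_bndoo _ _ _ _ true false) //; last exact: mpdf.
rewrite addeC -ge0_integralD //=; last 4 first.
- by move=> x _; rewrite lee_fin normal_pdf_ge0.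
- exact: mpdf.
- by move=> x _; rewrite lee_fin normal_pdf_ge0.
- exact: mpdfN.
Qed.
Lemma mqf (s m : R) (D : set R) : measurable_fun D (fun x => (qf s m x)%:E).
Proof.
apply: measurable_funTS; apply/measurable_EFinP; rewrite /qf.
apply: measurable_funD; first exact: measurable_normal_pdf.
apply: measurableT_comp => //; exact: measurable_normal_pdf.
Qed.

Definition G (s m h : R) := (\int[mu]_(x in `[0%R, h]) (qf s m x)%:E)%E.
Definition J (s m a b : R) := (\int[mu]_(x in `]a, b]) (qf s m x)%:E)%E.

Lemma Gsplit (s m a b : R) : 0 <= a <= b -> G s m b = (G s m a + J s m a b)%E.
Proof.
move=> /andP[a0 ab]; rewrite /G /J.
have -> : `[0%R, b]%classic = `[0%R, a]%classic `|` `]a, b]%classic :> set R.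
  apply/seteqP; split => x /=; rewrite !in_itv /=.
    move=> /andP[p q]; case: (lerP x a) => xa; [left|right]; rewrite /= ?in_itv /= ?andbT;
      by repeat (apply/andP; split); try done; lra.
  by case; rewrite /= ?in_itv /= => /andP[p q]; apply/andP; split; lra.
rewrite integral_setU //=; first exact: mqf.
rewrite disj_set2E; apply/eqP; apply/seteqP; split => x //=.
by rewrite !in_itv /= => -[/andP[p q] /andP[u v]]; lra.
Qed.

Lemma G_ge0 (s m h : R) : (0 <= G s m h)%E.
Proof. by apply: integral_ge0 => x _; rewrite lee_fin qf_ge0. Qed.
Lemma J_ge0 (s m a b : R) : (0 <= J s m a b)%E.
Proof. by apply: integral_ge0 => x _; rewrite lee_fin qf_ge0. Qed.

Lemma JZ (l s m a b : R) : 0 <= l ->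
  (l%:E * J s m a b = \int[mu]_(x in `]a, b]) (l * qf s m x)%:E)%E.
Proof.
move=> l0; rewrite /J -ge0_integralZl_EFin //.
- by move=> x _; rewrite lee_fin qf_ge0.
- exact: mqf.
Qed.

Lemma Jcmp_hi (s th c0 cz a b : R) : s != 0 -> - c0 < th < c0 -> 0 <= cz <= a ->
  (J s th a b <= (qf s th cz / qf s c0 cz)%:E * J s c0 a b)%E.
Proof.
move=> s0 hth /andP[cz0 cza].
have l0 : 0 <= qf s th cz / qf s c0 cz by rewrite divr_ge0 // qf_ge0.
rewrite JZ // /J.
apply: ge0_le_integral => //.
- by move=> x _; rewrite lee_fin qf_ge0.
- exact: mqf.
- apply: measurable_funTS; apply/measurable_EFinP; apply: measurable_funM => //.
  rewrite /qf; apply: measurable_funD; first exact: measurable_normal_pdf.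
  apply: measurableT_comp => //; exact: measurable_normal_pdf.
move=> x /=; rewrite in_itv /= => /andP[ax xb].
rewrite lee_fin; apply: qhi => //; apply/andP; split => //; lra.
Qed.

Lemma Jcmp_lo (s th c0 cz a b : R) : s != 0 -> - c0 < th < c0 -> 0 <= a -> b <= cz ->
  ((qf s th cz / qf s c0 cz)%:E * J s c0 a b <= J s th a b)%E.
Proof.
move=> s0 hth a0 bcz.
have l0 : 0 <= qf s th cz / qf s c0 cz by rewrite divr_ge0 // qf_ge0.
rewrite JZ // /J.
apply: ge0_le_integral => //.
- by move=> x _; rewrite lee_fin mulr_ge0 // qf_ge0.
- apply: measurable_funTS; apply/measurable_EFinP; apply: measurable_funM => //.
  rewrite /qf; apply: measurable_funD; first exact: measurable_normal_pdf.
  apply: measurableT_comp => //; exact: measurable_normal_pdf.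
- exact: mqf.
move=> x /=; rewrite in_itv /= => /andP[ax xb].
rewrite lee_fin; apply: qlo => //; apply/andP; split; lra.
Qed.

Lemma KLG (s th c0 cz h : R) : s != 0 -> - c0 < th < c0 -> 0 <= cz -> 0 <= h ->
  (G s th h + (qf s th cz / qf s c0 cz)%:E * G s c0 cz <=
   G s th cz + (qf s th cz / qf s c0 cz)%:E * G s c0 h)%E.
Proof.
move=> s0 hth cz0 h0.
set l := qf s th cz / qf s c0 cz.
have l0 : 0 <= l by rewrite divr_ge0 // qf_ge0.
case: (lerP cz h) => hc.
- rewrite (@Gsplit s th cz h) ?cz0 // (@Gsplit s c0 cz h) ?cz0 //.
  have HJ : (J s th cz h <= l%:E * J s c0 cz h)%E by apply: Jcmp_hi => //; rewrite cz0 lexx.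
  have g1 := G_ge0 s c0 cz; have g2 := J_ge0 s c0 cz h.
  move: (G s th cz) (J s th cz h) (G s c0 cz) (J s c0 cz h) HJ g1 g2 => A B C D HJ g1 g2.
  rewrite ge0_muleDr //.
  rewrite -addeA; apply: leeD; first exact: lexx.
  rewrite addeC; apply: leeD; [exact: lexx|exact: HJ].
- have hh : 0 <= h <= cz by rewrite h0 ltW.
  rewrite (@Gsplit s th h cz hh) (@Gsplit s c0 h cz hh).
  have HJ : (l%:E * J s c0 h cz <= J s th h cz)%E by apply: Jcmp_lo.
  have g1 := G_ge0 s c0 h; have g2 := J_ge0 s c0 h cz.
  move: (G s th h) (J s th h cz) (G s c0 h) (J s c0 h cz) HJ g1 g2 => A B C D HJ g1 g2.
  rewrite ge0_muleDr //.
  rewrite -addeA; apply: leeD; first exact: lexx.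
  rewrite addeC; apply: leeD; [exact: lexx|exact: HJ].
Qed.
Lemma Iset_itv (h : R) : Iset h = `](- h), h[%classic.
Proof.
by apply/seteqP; split => x /=; rewrite in_itv /=.
Qed.

Lemma mIset (h : R) : measurable (Iset h).
Proof. by rewrite Iset_itv; exact: measurable_itv. Qed.

Lemma Iset_neg (h : R) : h <= 0 -> Iset h = Iset 0.
Proof.
move=> h0; apply/seteqP; split => x /= /andP[a b]; lra.
Qed.

Lemma NG (s m h : R) : s != 0 -> 0 <= h -> normal_prob m s (Iset h) = G s m h.
Proof. by move=> s0 h0; rewrite NI. Qed.

Lemma KLN (s th c0 cz h : R) : s != 0 -> - c0 < th < c0 -> 0 <= cz ->
  (normal_prob th s (Iset h) + (qf s th cz / qf s c0 cz)%:E * normal_prob c0 s (Iset cz) <=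
   normal_prob th s (Iset cz) + (qf s th cz / qf s c0 cz)%:E * normal_prob c0 s (Iset h))%E.
Proof.
move=> s0 hth cz0.
case: (lerP 0 h) => h0.
  by rewrite !NG //; apply: KLG.
rewrite (@Iset_neg h (ltW h0)) !NG //; exact: KLG.
Qed.

Definition gr (s m h : R) := fine (normal_prob m s (Iset h)).

Lemma grE (s m h : R) : normal_prob m s (Iset h) = (gr s m h)%:E.
Proof. by rewrite /gr fineK // fin_num_measure //; exact: mIset. Qed.

Lemma gr_ge0 (s m h : R) : 0 <= gr s m h.
Proof. by rewrite /gr fine_ge0. Qed.

Lemma gr_le1 (s m h : R) : gr s m h <= 1.
Proof.
have : (normal_prob m s (Iset h) <= 1)%E by apply: probability_le1; exact: mIset.
by rewrite grE lee_fin.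
Qed.

Lemma gr_mono (s m h1 h2 : R) : h1 <= h2 -> gr s m h1 <= gr s m h2.
Proof.
move=> h12; rewrite -lee_fin -!grE; apply: le_measure; rewrite ?inE; try exact: mIset.
by move=> x /= /andP[a b]; apply/andP; split; lra.
Qed.

Lemma KLgr (s th c0 cz h : R) : s != 0 -> - c0 < th < c0 -> 0 <= cz ->
  gr s th h + (qf s th cz / qf s c0 cz) * gr s c0 cz <=
  gr s th cz + (qf s th cz / qf s c0 cz) * gr s c0 h.
Proof.
move=> s0 hth cz0; have := @KLN s th c0 cz h s0 hth cz0.
by rewrite !grE -!EFinM -!EFinD lee_fin.
Qed.

Lemma AR (t c sh : R) : accept_region t c sh = Iset (c - t * sh).
Proof. by rewrite /accept_region /Iset opprB. Qed.
Lemma fin_of_fine (x : \bar R) (a : R) : fine x = a -> a != 0 -> x \is a fin_num.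
Proof. by case: x => //= <-; rewrite eqxx. Qed.

Lemma fin_of_mul (b : R) (x : \bar R) : (0 <= x)%E ->
  (b%:E * x)%E \is a fin_num -> (b%:E * x)%E != 0%E -> x \is a fin_num.
Proof.
case: x => [r| |] //= _ hf hn.
case: (ltrgtP b 0) => hb.
- by move: hf; rewrite mulry ltr0_sg // mulN1e.
- by move: hf; rewrite mulry gtr0_sg // mul1e.
- by move: hn; rewrite hb mul0e eqxx.
Qed.
Lemma mD : measurable (@pos_half_line R).
Proof. exact: measurable_itv. Qed.

Lemma chi2_pdf_ge0 (nu u : R) : 0 <= chi2_pdf nu u.
Proof.
rewrite /chi2_pdf; case: ifP => // _.
apply: divr_ge0.
  by rewrite /chi2_kernel mulr_ge0 ?powR_ge0 ?expR_ge0.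
rewrite /chi2_const fine_ge0 //; apply: integral_ge0 => x _.
by rewrite lee_fin /chi2_kernel mulr_ge0 ?powR_ge0 ?expR_ge0.
Qed.

Lemma mP (nu : R) : measurable_fun pos_half_line (chi2_pdf nu).
Proof.
apply: (eq_measurable_fun (fun u => chi2_kernel nu u / chi2_const nu)).
  move=> u; rewrite inE /pos_half_line /= in_itv /= andbT => u0.
  by rewrite /chi2_pdf u0.
apply: measurable_funTS; apply: measurable_funM => //.
rewrite /chi2_kernel; apply: measurable_funM.
  exact: measurable_powR.
apply: measurableT_comp => //; apply: measurable_funM => //.
Qed.

Lemma sigma_hat_mono (s nu u1 u2 : R) : 0 <= s -> 0 < nu -> u1 <= u2 ->
  sigma_hat s nu u1 <= sigma_hat s nu u2.
Proof.
move=> s0 nu0 u12; rewrite /sigma_hat ler_wpM2l //.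
case: (lerP 0 (u2 / nu)) => h.
  by rewrite ler_sqrt // ler_pM2r // invr_gt0.
have h1 : u1 / nu <= u2 / nu by rewrite ler_pM2r // invr_gt0.
by rewrite (ler0_sqrtr (ltW (le_lt_trans h1 h))) (ler0_sqrtr (ltW h)).
Qed.

Lemma mInt (s nu m c t : R) : 0 <= s -> 0 < nu -> 0 <= t ->
  measurable_fun pos_half_line
    (fun u => chi2_pdf nu u * gr s m (c - t * sigma_hat s nu u)).
Proof.
move=> s0 nu0 t0; apply: measurable_funM; first exact: mP.
apply: measurable_realfun.nonincreasing_measurable; first exact: mD.
move=> u1 u2 u12; apply: gr_mono.
rewrite lerD2l lerN2 ler_wpM2l //; exact: sigma_hat_mono.
Qed.
Lemma intDZ (f g : R -> R) (l : R) : 0 <= l -> (forall u, 0 <= f u) ->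
  (forall u, 0 <= g u) -> measurable_fun pos_half_line f ->
  measurable_fun pos_half_line g ->
  (\int[lebesgue_measure]_(u in pos_half_line) (f u + l * g u)%:E =
   \int[lebesgue_measure]_(u in pos_half_line) (f u)%:E +
   l%:E * \int[lebesgue_measure]_(u in pos_half_line) (g u)%:E)%E.
Proof.
move=> l0 f0 g0 mf mg.
have mD' := mD.
under eq_integral do rewrite EFinD EFinM.
rewrite ge0_integralD //;
  try (by move=> x _; rewrite ?lee_fin // -?EFinM ?lee_fin ?mulr_ge0);
  try (by apply/measurable_EFinP);
  try (by apply: emeasurable_funM => //; apply/measurable_EFinP).
rewrite ge0_integralZl_EFin //;
  try (by move=> x _; rewrite ?lee_fin);
  try (by apply/measurable_EFinP).
Qed.
Lemma intle (f1 f2 : R -> R) : (forall u, 0 <= f1 u) ->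
  measurable_fun pos_half_line f1 -> measurable_fun pos_half_line f2 ->
  (forall u, f1 u <= f2 u) ->
  (\int[lebesgue_measure]_(u in pos_half_line) (f1 u)%:E <= \int[lebesgue_measure]_(u in pos_half_line) (f2 u)%:E)%E.
Proof.
move=> f0 m1 m2 f12; apply: ge0_le_integral.
- exact: mD.
- by move=> u _; rewrite lee_fin.
- exact/measurable_EFinP.
- exact/measurable_EFinP.
- by move=> u _; rewrite lee_fin.
Qed.

Lemma intZc (f : R -> R) (b : R) : 0 <= b -> (forall u, 0 <= f u) ->
  measurable_fun pos_half_line f ->
  (\int[lebesgue_measure]_(u in pos_half_line) (f u * b)%:E =
   b%:E * \int[lebesgue_measure]_(u in pos_half_line) (f u)%:E)%E.
Proof.
move=> b0 f0 mf.
rewrite -(@ge0_integralZl_EFin _ _ _ lebesgue_measure pos_half_line mD (fun u => (f u)%:E)).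
- by apply: eq_integral => u _; rewrite mulrC EFinM.
- by move=> u _; rewrite lee_fin.
- exact/measurable_EFinP.
- exact: b0.
Qed.

Lemma endgame (X Y Z W IP : \bar R) (l bY bZ alpha : R) :
  0 <= l -> alpha != 0 -> (0 <= X)%E -> (X <= IP)%E -> (0 <= IP)%E ->
  0 <= bY -> 0 <= bZ ->
  Y = (bY%:E * IP)%E -> Z = (bZ%:E * IP)%E -> fine Y = alpha -> fine W = alpha ->
  (X + l%:E * Y <= Z + l%:E * W)%E -> fine X <= fine Z.
Proof.
move=> l0 an X0 XIP IP0 bY0 bZ0 HY HZ fY fW key.
have Yfin : Y \is a fin_num by exact: fin_of_fine fY an.
have Wfin : W \is a fin_num by exact: fin_of_fine fW an.
have YW : Y = W by rewrite -(fineK Yfin) -(fineK Wfin) fY fW.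
have IPfin : IP \is a fin_num.
  apply: (@fin_of_mul bY) => //; first by rewrite -HY.
  rewrite -HY; apply/negP => /eqP Y0; move: fY; rewrite Y0 /= => a00.
  by move: an; rewrite -a00 eqxx.
have Zfin : Z \is a fin_num by rewrite HZ fin_numM.
have Xfin : X \is a fin_num.
  rewrite ge0_fin_numE //; apply: (le_lt_trans XIP).
  by rewrite -ge0_fin_numE.
rewrite -YW in key.
rewrite leeD2rE in key; last by rewrite fin_numM.
exact: fine_le.
Qed.
End P1.

Theorem theorem1 (R : realType) (c0 alpha0 nu2 sigma1 : R) :
  0 < c0 -> 0 < alpha0 < 1 / 2 -> 0 < nu2 -> 0 < sigma1 ->
  forall (t theta ct cz : R),
    0 < t -> - c0 < theta < c0 ->
    0 < ct -> omega c0 sigma1 nu2 t ct = alpha0 ->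
    0 < cz -> omega c0 sigma1 nu2 0 cz = alpha0 ->
    omega theta sigma1 nu2 t ct <= omega theta sigma1 nu2 0 cz.
Proof.
move=> c00 /andP[a0 a1] nu0 s0 t th ct cz t0 hth ct0 Hct cz0 Hcz.
have sn : sigma1 != 0 by rewrite gt_eqF.
pose P := chi2_pdf nu2.
pose h := fun u => ct - t * sigma_hat sigma1 nu2 u.
have E : forall m, omega m sigma1 nu2 t ct =
  fine (\int[lebesgue_measure]_(u in pos_half_line) (P u * gr sigma1 m (h u))%:E)%E.
  move=> m; rewrite /omega; congr fine; apply: eq_integral => u _.
  by rewrite AR grE EFinM.
have E0 : forall m, omega m sigma1 nu2 0 cz =
  fine (\int[lebesgue_measure]_(u in pos_half_line) (P u * gr sigma1 m cz)%:E)%E.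
  move=> m; rewrite /omega; congr fine; apply: eq_integral => u _.
  by rewrite AR mul0r subr0 grE EFinM.
rewrite E in Hct; rewrite E0 in Hcz; rewrite E E0.
pose l := qf sigma1 th cz / qf sigma1 c0 cz.
have l0 : 0 <= l by rewrite divr_ge0 // qf_ge0.
have P0 : forall u, 0 <= P u by move=> u; exact: chi2_pdf_ge0.
have mPP : measurable_fun pos_half_line P by exact: mP.
have mH : forall m, measurable_fun pos_half_line (fun u => P u * gr sigma1 m (h u)).
  by move=> m; apply: mInt => //; [exact: ltW | exact: ltW].
have mC : forall m, measurable_fun pos_half_line (fun u => P u * gr sigma1 m cz).
  by move=> m; apply: measurable_funM => //; exact: measurable_cst.
have H0 : forall m u, 0 <= P u * gr sigma1 m (h u) by move=> m u; rewrite mulr_ge0 ?gr_ge0.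
have C0 : forall m u, 0 <= P u * gr sigma1 m cz by move=> m u; rewrite mulr_ge0 ?gr_ge0.
have key := @intle R (fun u => P u * gr sigma1 th (h u) + l * (P u * gr sigma1 c0 cz))
  (fun u => P u * gr sigma1 th cz + l * (P u * gr sigma1 c0 (h u))).
rewrite (@intDZ R (fun u => P u * gr sigma1 th (h u)) (fun u => P u * gr sigma1 c0 cz)) //
  in key.
rewrite (@intDZ R (fun u => P u * gr sigma1 th cz) (fun u => P u * gr sigma1 c0 (h u))) //
  in key.
have X0 : (0 <= \int[lebesgue_measure]_(u in pos_half_line) (P u * gr sigma1 th (h u))%:E)%E.
  by apply: integral_ge0 => u _; rewrite lee_fin.
have XIP : (\int[lebesgue_measure]_(u in pos_half_line) (P u * gr sigma1 th (h u))%:E <=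
    \int[lebesgue_measure]_(u in pos_half_line) (P u)%:E)%E.
  refine (@intle R (fun u => P u * gr sigma1 th (h u)) P (H0 th) (mH th) mPP _).
  by move=> u; rewrite ler_piMr ?gr_le1.
have IP0 : (0 <= \int[lebesgue_measure]_(u in pos_half_line) (P u)%:E)%E.
  by apply: integral_ge0 => u _; rewrite lee_fin.
have HY := @intZc R P (gr sigma1 c0 cz) (gr_ge0 _ _ _) P0 mPP.
have HZ := @intZc R P (gr sigma1 th cz) (gr_ge0 _ _ _) P0 mPP.
have an : alpha0 != 0 by rewrite gt_eqF.
refine (@endgame R _ _ _ _ _ l _ _ alpha0 l0 an X0 XIP IP0 (gr_ge0 _ _ _) (gr_ge0 _ _ _) HY HZ Hcz Hct _).
refine (key _ _ _ _).
- by move=> u; apply: addr_ge0; [exact: H0 | apply: mulr_ge0; [exact: l0 | exact: C0]].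
- exact: (measurable_funD (mH th) (measurable_funM (measurable_cst l) (mC c0))).
- exact: (measurable_funD (mC th) (measurable_funM (measurable_cst l) (mH c0))).
move=> u.
have K := @KLgr R sigma1 th c0 cz (h u) sn hth (ltW cz0).
have := ler_wpM2l (P0 u) K.
rewrite -/l.
have -> : P u * (gr sigma1 th (h u) + l * gr sigma1 c0 cz) =
  P u * gr sigma1 th (h u) + l * (P u * gr sigma1 c0 cz) by ring.
have -> : P u * (gr sigma1 th cz + l * gr sigma1 c0 (h u)) =
  P u * gr sigma1 th cz + l * (P u * gr sigma1 c0 (h u)) by ring.
by [].
Qed.
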